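(* Let $G$ be a Schur positive tripartite graph. If all stable tripartitions of $G$ have the same type, then every stable tripartition of $G$ is balanced, i.e., its three block sizes pairwise differ by at most $1$.
   Context: For a finite simple graph $G$, the chromatic symmetric function is $X_G=\sum_{\kappa}\prod_{v\in V(G)}x_{\kappa(v)}$ over proper colorings $\kappa:V(G)\to\{1,2,\dots\}$; $G$ is Schur positive if all coefficients of $X_G$ in the Schur basis are nonnegative. A stable tripartition of $G$ is a set partition of $V(G)$ into three stable (independent) sets; its type is the integer partition formed by the three block sizes. A tripartite graph is a graph admitting a stable tripartition. *)

(* Defs.v *)
From HB Require Import structures.
From mathcomp Require Import all_boot all_order all_algebra.
From mathcomp Require Import mpoly.
Set Implicit Arguments. Unset Strict Implicit. Unset Printing Implicit Defensive.
Import Order.TTheory GRing.Theory Num.Theory.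

Definition simple_graph (T : finType) (e : rel T) : Prop :=
  ssrbool.symmetric e /\ ssrbool.irreflexive e.

Notation nv T := #|T|.

(* Proper colorings with colors in {0,..,|V|-1} (enough variables). *)
Definition proper_coloring (T : finType) (e : rel T) (k : {ffun T -> 'I_(nv T)}) :=
  [forall u, forall v, e u v ==> (k u != k v)].

Definition chrom_sym (T : finType) (e : rel T) : {mpoly rat[nv T]} :=
  (\sum_(k : {ffun T -> 'I_(nv T)} | proper_coloring e k)
      \prod_(v : T) 'X_(k v))%R.

(* Integer partitions of n, with at most n parts, encoded as a function
   i |-> lambda_i (parts listed by index, zero-padded). *)
Definition is_partition (n : nat) (la : {ffun 'I_n -> 'I_n.+1}) : bool :=
  [forall i : 'I_n, forall j : 'I_n, (i <= j) ==> (la j <= la i)] &&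
  (\sum_(i < n) (la i : nat) == n).

Definition in_shape (n : nat) (la : {ffun 'I_n -> 'I_n.+1}) (c : 'I_n * 'I_n) : bool :=
  c.2 < la c.1.

(* Semistandard Young tableaux of shape la with entries in 'I_n;
   entries outside the diagram are normalized to 0. *)
Definition is_ssyt (n : nat) (la : {ffun 'I_n -> 'I_n.+1})
    (t : {ffun 'I_n * 'I_n -> 'I_n}) : bool :=
  [forall c, ~~ in_shape la c ==> (val (t c) == 0%N)] &&
  [forall i : 'I_n, forall j : 'I_n, forall j' : 'I_n,
     [&& in_shape la (i, j), in_shape la (i, j') & j < j'] ==>
       (t (i, j) <= t (i, j'))] &&
  [forall i : 'I_n, forall i' : 'I_n, forall j : 'I_n,
     [&& in_shape la (i, j), in_shape la (i', j) & i < i'] ==>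
       (t (i, j) < t (i', j))].

Definition schur (n : nat) (la : {ffun 'I_n -> 'I_n.+1}) : {mpoly rat[n]} :=
  (\sum_(t : {ffun 'I_n * 'I_n -> 'I_n} | is_ssyt la t)
      \prod_(c : 'I_n * 'I_n | in_shape la c) 'X_(t c))%R.

Definition schur_positive (T : finType) (e : rel T) : Prop :=
  exists c : {ffun 'I_(nv T) -> 'I_(nv T).+1} -> rat,
    (forall la, (0 <= c la)%R) /\
    chrom_sym e = (\sum_(la | is_partition la) c la *: schur la)%R.

Definition stable (T : finType) (e : rel T) (A : {set T}) : bool :=
  [forall u in A, forall v in A, ~~ e u v].

(* Stable tripartition: set partition of V (nonempty blocks) into three
   stable blocks. *)
Definition stable_tripartition (T : finType) (e : rel T) (P : {set {set T}}) : Prop :=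
  [/\ partition P [set: T], #|P| = 3 & {in P, forall B, stable e B}].

Definition tripartite (T : finType) (e : rel T) : Prop :=
  exists P, stable_tripartition e P.

Definition ptype (T : finType) (P : {set {set T}}) : seq nat :=
  sort geq [seq #|B| | B : {set T} <- enum (mem P)].

Definition balanced (T : finType) (P : {set {set T}}) : Prop :=
  {in P &, forall B1 B2 : {set T}, #|B1| <= #|B2| + 1}.

(* Main.v *)
Require Import Defs.
From HB Require Import structures.
From mathcomp Require Import all_boot all_order all_algebra.
From mathcomp Require Import mpoly.
From mathcomp Require Import zify.
Set Implicit Arguments. Unset Strict Implicit. Unset Printing Implicit Defensive.
Import Order.TTheory GRing.Theory Num.Theory.


Lemma sum_lt n b : \sum_(j < n) ((j < b) : nat) = minn b n.
Proof.
elim: n => [|n IH]; first by rewrite big_ord0; lia.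
rewrite big_ord_recr /= IH; lia.
Qed.

Lemma shape_sum n (la : {ffun 'I_n -> 'I_n.+1}) (h : 'I_n * 'I_n -> nat) :
  \sum_(c | in_shape la c) h c = \sum_(i < n) \sum_(j < n | j < la i) h (i, j).
Proof. by rewrite pair_big_dep /=; apply: eq_big => [[i j]|[i j] _]. Qed.

Lemma sum3 n (i0 i1 i2 : 'I_n) (F : 'I_n -> nat) :
  i0 = 0 :> nat -> i1 = 1 :> nat -> i2 = 2 :> nat ->
  (forall r : 'I_n, 2 < r -> F r = 0) -> \sum_r F r = F i0 + F i1 + F i2.
Proof.
move=> h0 h1 h2 HF.
rewrite (bigD1 i0) // (bigD1 i1) /=; last by rewrite -val_eqE /= h0 h1.
rewrite (bigD1 i2) /=; last by rewrite -!val_eqE /= h0 h1 h2.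
rewrite big1; first lia.
move=> r Hr; apply: HF; move: Hr; rewrite -!val_eqE /= h0 h1 h2; lia.
Qed.

Lemma shape_sum3 n (la : {ffun 'I_n -> 'I_n.+1}) (i0 i1 i2 : 'I_n) (h : 'I_n * 'I_n -> nat) :
  i0 = 0 :> nat -> i1 = 1 :> nat -> i2 = 2 :> nat ->
  (forall r : 'I_n, 2 < r -> la r = 0 :> nat) ->
  \sum_(c | in_shape la c) h c =
    \sum_(j < n) (if j < la i0 then h (i0, j) else 0) +
    \sum_(j < n) (if j < la i1 then h (i1, j) else 0) +
    \sum_(j < n) (if j < la i2 then h (i2, j) else 0).
Proof.
move=> h0 h1 h2 H3; rewrite shape_sum (@sum3 n i0 i1 i2 _ h0 h1 h2); first by rewrite -!big_mkcond.
move=> r Hr; rewrite big1 // => j; rewrite H3 //.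
Qed.

Lemma sum_lt_le n b : b <= n -> \sum_(j < n) ((j < b) : nat) = b.
Proof. rewrite sum_lt; lia. Qed.

Lemma row_le n (la : {ffun 'I_n -> 'I_n.+1}) t : is_partition la -> is_ssyt la t ->
  forall c, in_shape la c -> c.1 <= t c.
Proof.
move=> /andP[/forallP Hmon _] /andP[_ /forallP Hcol].
suff H : forall r (c : 'I_n * 'I_n), c.1 = r :> nat -> in_shape la c -> c.1 <= t c.
  by move=> c; apply: H.
elim => [|r IH] [i j] /= Hi Hin; first by rewrite Hi.
have Hi' : r < n by have := ltn_ord i; lia.
pose i' := Ordinal Hi'.
have Hin' : in_shape la (i', j).
  move: Hin; rewrite /in_shape /=; move/forallP: (Hmon i') => /(_ i) /implyP.
  rewrite /= Hi => H; have := H (leqnSn r); lia.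
move/forallP: (Hcol i') => /(_ i) /forallP /(_ j) /implyP.
rewrite Hin' Hin /= Hi ltnSn => /(_ isT).
have := IH (i', j) erefl Hin'; rewrite /=; lia.
Qed.

Lemma row_sum n (la : {ffun 'I_n -> 'I_n.+1}) (g : 'I_n -> nat) :
  \sum_(c | in_shape la c) g c.1 = \sum_(i < n) la i * g i.
Proof.
rewrite shape_sum; apply eq_bigr => i _.
transitivity (\sum_(j < n) (j < la i) * g i).
  by rewrite big_mkcond; apply eq_bigr => j _; case: (j < la i); rewrite ?mul1n ?mul0n.
rewrite -big_distrl /= sum_lt_le //; have := ltn_ord (la i); lia.
Qed.

Definition tvf n (la : {ffun 'I_n -> 'I_n.+1}) (p x q : nat) (c : 'I_n * 'I_n) : nat :=
  if in_shape la c then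
    (if c.1 == 0 :> nat then (if c.2 < p then 0 else if c.2 < p + x then 1 else 2)
     else if c.1 == 1 :> nat then (if c.2 < q - x then 1 else 2) else 2)
  else 0.

Lemma tableau_move n (la : {ffun 'I_n -> 'I_n.+1}) (t : {ffun 'I_n * 'I_n -> 'I_n})
    (i0 i1 i2 : 'I_n) (A B C : nat) :
  i0 = 0 :> nat -> i1 = 1 :> nat -> i2 = 2 :> nat ->
  is_partition la -> is_ssyt la t ->
  (forall i : 'I_n, \sum_(c | in_shape la c) ((t c == i) : nat) =
     if i == i0 then A else if i == i1 then B else if i == i2 then C else 0) ->
  C <= B <= A -> C + 2 <= A ->
  exists t' : {ffun 'I_n * 'I_n -> 'I_n}, is_ssyt la t' /\
   forall i : 'I_n, \sum_(c | in_shape la c) ((t' c == i) : nat) =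
     if i == i0 then A.-1 else if i == i1 then B else if i == i2 then C.+1 else 0.
Proof.
move=> h0 h1 h2 Hla Ht Hcnt HCBA HCA.
have n01 : (i1 == i0) = false by rewrite -val_eqE /= h0 h1.
have n02 : (i2 == i0) = false by rewrite -val_eqE /= h0 h2.
have n12 : (i2 == i1) = false by rewrite -val_eqE /= h1 h2.
have HA := Hcnt i0; rewrite eqxx in HA.
have HB := Hcnt i1; rewrite n01 eqxx in HB.
have HC := Hcnt i2; rewrite n02 n12 eqxx in HC.
have Hrow := row_le Hla Ht.
have Hle2 : forall c, in_shape la c -> t c <= 2.
  move=> c Hc; rewrite leqNgt; apply/negP => H2.
  have : 0 < \sum_(c' | in_shape la c') ((t c' == t c) : nat) by rewrite (bigD1 c) //= eqxx.
  rewrite Hcnt; have -> : (t c == i0) = false by rewrite -val_eqE /= h0; lia.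
  have -> : (t c == i1) = false by rewrite -val_eqE /= h1; lia.
  have -> : (t c == i2) = false by rewrite -val_eqE /= h2; lia.
  done.
have Hla3 : forall r : 'I_n, 2 < r -> la r = 0 :> nat.
  move=> r Hr; apply/eqP; rewrite -leqn0 leqNgt; apply/negP => Hpos.
  have Hc : in_shape la (r, i0) by rewrite /in_shape /= h0.
  have := Hrow _ Hc; have := Hle2 _ Hc; rewrite /=; lia.
have Hmon : forall i j : 'I_n, i <= j -> la j <= la i.
  move: Hla => /andP[/forallP Hmon _] i j Hij.
  by move/forallP: (Hmon i) => /(_ j) /implyP /(_ Hij).
have Hsum : \sum_(i < n) (la i : nat) = n by move: Hla => /andP[_ /eqP].
have Hrs : forall g : 'I_n -> nat, \sum_(c | in_shape la c) g c.1 = la i0 * g i0 + la i1 * g i1 + la i2 * g i2.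
  move=> g; rewrite row_sum (@sum3 n i0 i1 i2 _ h0 h1 h2) // => r Hr; by rewrite Hla3.
have Hn : la i0 + la i1 + la i2 = n.
  rewrite -[RHS]Hsum (@sum3 n i0 i1 i2 _ h0 h1 h2) // => r Hr; by rewrite Hla3.
have Htot : \sum_(c | in_shape la c) 1 = n.
  by rewrite (Hrs (fun _ => 1)) !muln1 Hn.
have HABC : A + B + C = n.
  rewrite -Htot -HA -HB -HC -!big_split /=; apply eq_bigr => c Hc.
  have := Hle2 c Hc; rewrite -!val_eqE /= h0 h1 h2; lia.
have F1 : A <= la i0.
  rewrite -HA; apply: (@leq_trans (\sum_(c | in_shape la c) ((c.1 <= 0) : nat))).
    apply: leq_sum => c Hc; have := Hrow c Hc; rewrite -val_eqE /= h0; lia.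
  rewrite (Hrs (fun i => ((i <= 0) : nat))) h0 h1 h2; lia.
have F2 : A + B <= la i0 + la i1.
  rewrite -HA -HB -big_split; apply: (@leq_trans (\sum_(c | in_shape la c) ((c.1 <= 1) : nat))).
    apply: leq_sum => c Hc; have := Hrow c Hc; rewrite -!val_eqE /= h0 h1; lia.
  rewrite (Hrs (fun i => ((i <= 1) : nat))) h0 h1 h2; lia.
have M01 := Hmon i0 i1; have M12 := Hmon i1 i2.
rewrite h0 h1 h2 in M01 M12.
have {M01}M01 := M01 isT; have {M12}M12 := M12 isT.
pose x := maxn (maxn (la i1 - A.-1) (B - la i1)) (B - A.-1).
have Hx : [/\ la i1 - A.-1 <= x, B - la i1 <= x, B - A.-1 <= x, x <= B - la i2 & x <= la i0 - A.-1].
  by rewrite /x; split; lia.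
have tv2 : forall c, tvf la A.-1 x B c <= 2 by move=> c; rewrite /tvf; do ! case: ifP.
have n2 : 2 < n by have := ltn_ord i2; lia.
pose t' := [ffun c => insubd i0 (tvf la A.-1 x B c)] : {ffun 'I_n * 'I_n -> 'I_n}.
have Htv : forall c, (t' c : nat) = tvf la A.-1 x B c.
  by move=> c; rewrite ffunE val_insubd ifT //; have := tv2 c; lia.
have Htv' : forall c, val (t' c) = tvf la A.-1 x B c := Htv.
exists t'; split.
  apply/andP; split; first (apply/andP; split).
  - apply/forallP => c; apply/implyP => Hc; by rewrite Htv' /tvf (negbTE Hc).
  - apply/forallP => i; apply/forallP => j; apply/forallP => j'; apply/implyP => /and3P[Hi Hj Hjj'].
    rewrite !Htv /tvf Hi Hj /=; do ! case: ifP => ?; lia.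
  - apply/forallP => i; apply/forallP => i'; apply/forallP => j; apply/implyP => /and3P[Hi Hi' Hii'].
    have Hi'2 : i' <= 2.
      by case: (leqP i' 2) => // /Hla3 H; move: Hi'; rewrite /in_shape /= H.
    have : (i' == i1) || (i' == i2) by rewrite -!val_eqE /= h1 h2; lia.
    have : (i == i0) || (i == i1) by rewrite -!val_eqE /= h0 h1; lia.
    case/orP => /eqP Ei; case/orP => /eqP Ei'; subst i i'; rewrite !Htv /tvf ?Hi ?Hi' /= ?h0 ?h1 ?h2 /=;
      move: Hi Hi'; rewrite /in_shape /= => Hi Hi'; case: Hx => *; do ! case: ifP => ?; lia.
have R00 : forall j : 'I_n, (if j < la i0 then ((tvf la A.-1 x B (i0, j) == 0) : nat) else 0) = (j < A.-1).
  by move=> j; rewrite /tvf /in_shape /= h0 /=; case: Hx => *; do ! case: ifP => ?; lia.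
have R10 : forall j : 'I_n, (if j < la i1 then ((tvf la A.-1 x B (i1, j) == 0) : nat) else 0) = 0.
  by move=> j; rewrite /tvf /in_shape /= h1 /=; case: Hx => *; do ! case: ifP => ?; lia.
have R20 : forall j : 'I_n, (if j < la i2 then ((tvf la A.-1 x B (i2, j) == 0) : nat) else 0) = 0.
  by move=> j; rewrite /tvf /in_shape /= h2 /=; case: Hx => *; do ! case: ifP => ?; lia.
have R01 : forall j : 'I_n, (if j < la i0 then ((tvf la A.-1 x B (i0, j) <= 1) : nat) else 0) = (j < A.-1 + x).
  by move=> j; rewrite /tvf /in_shape /= h0 /=; case: Hx => *; do ! case: ifP => ?; lia.
have R11 : forall j : 'I_n, (if j < la i1 then ((tvf la A.-1 x B (i1, j) <= 1) : nat) else 0) = (j < B - x).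
  by move=> j; rewrite /tvf /in_shape /= h1 /=; case: Hx => *; do ! case: ifP => ?; lia.
have R21 : forall j : 'I_n, (if j < la i2 then ((tvf la A.-1 x B (i2, j) <= 1) : nat) else 0) = 0.
  by move=> j; rewrite /tvf /in_shape /= h2 /=; case: Hx => *; do ! case: ifP => ?; lia.
have S0 : \sum_(c | in_shape la c) ((tvf la A.-1 x B c == 0) : nat) = A.-1.
  rewrite (@shape_sum3 n la i0 i1 i2 _ h0 h1 h2 Hla3) /=.
  rewrite (eq_bigr _ (fun j _ => R00 j)) (eq_bigr _ (fun j _ => R10 j)) (eq_bigr _ (fun j _ => R20 j)).
  rewrite sum_lt_le ?big1_eq; lia.
have S01 : \sum_(c | in_shape la c) ((tvf la A.-1 x B c <= 1) : nat) = A.-1 + B.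
  rewrite (@shape_sum3 n la i0 i1 i2 _ h0 h1 h2 Hla3) /=.
  rewrite (eq_bigr _ (fun j _ => R01 j)) (eq_bigr _ (fun j _ => R11 j)) (eq_bigr _ (fun j _ => R21 j)).
  rewrite !sum_lt_le ?big1_eq; case: Hx => *; lia.
have S1 : \sum_(c | in_shape la c) ((tvf la A.-1 x B c == 1) : nat) = B.
  suff : \sum_(c | in_shape la c) ((tvf la A.-1 x B c <= 1) : nat) =
    \sum_(c | in_shape la c) ((tvf la A.-1 x B c == 0) : nat) + \sum_(c | in_shape la c) ((tvf la A.-1 x B c == 1) : nat).
    rewrite S01 S0; lia.
  rewrite -big_split; apply eq_bigr => c _ /=; lia.
have S2 : \sum_(c | in_shape la c) ((tvf la A.-1 x B c == 2) : nat) = C.+1.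
  suff : \sum_(c | in_shape la c) 1 =
    \sum_(c | in_shape la c) ((tvf la A.-1 x B c <= 1) : nat) + \sum_(c | in_shape la c) ((tvf la A.-1 x B c == 2) : nat).
    rewrite S01 Htot; lia.
  rewrite -big_split; apply eq_bigr => c _ /=; have := tv2 c; lia.
move=> i.
rewrite (eq_bigr (fun c => ((tvf la A.-1 x B c == i) : nat))); last by move=> c _; rewrite -val_eqE /= Htv.
case: (eqVneq i i0) => [->|ne0]; first by rewrite h0.
case: (eqVneq i i1) => [->|ne1]; first by rewrite h1.
case: (eqVneq i i2) => [->|ne2]; first by rewrite h2.
rewrite big1 // => c _; move: ne0 ne1 ne2; rewrite -!val_eqE /= h0 h1 h2; have := tv2 c; lia.
Qed.

Lemma exists_of_sum' (I : finType) (P : pred I) (M : eqType) (F : I -> M) (m : M) :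
  (0 < \sum_(i | P i) (F i == m))%N -> exists i, P i /\ F i = m.
Proof.
move=> Hs; case: (pickP (fun i => P i && (F i == m))) => [i /andP[Pi /eqP]|H]; first by eauto.
exfalso; move: Hs; rewrite big1 // => i Pi; have:= H i; rewrite Pi /=; by move/negbT/negbTE ->.
Qed.

Section Coeff.
Local Open Scope ring_scope.
Variables (T : finType) (e : rel T).
Local Notation n := #|T|.

Definition mono (k : {ffun T -> 'I_n}) : 'X_{1..n} := (\sum_(v : T) U_(k v))%MM.

Lemma prodX (k : {ffun T -> 'I_n}) : (\prod_(v:T) 'X_(k v) : {mpoly rat[n]})%R = 'X_[mono k].
Proof. by rewrite /mono (big_morph (fun m => 'X_[m]) (@mpolyXD _ _) (@mpolyX0 _ _)). Qed.

Lemma mcoeff_chrom m : mcoeff m (chrom_sym e) = ((\sum_(k | proper_coloring e k) (mono k == m)) : nat)%:R.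
Proof. rewrite /chrom_sym raddf_sum natr_sum /=; apply eq_bigr => k _. by rewrite prodX mcoeffX. Qed.

Lemma monoE k i : mono k i = #|[set v | k v == i]|.
Proof.
rewrite /mono mnm_sumE cardsE -sum1_card [RHS]big_mkcond /=; apply eq_bigr => v _.
rewrite mnm1E unfold_in /= -[eqn _ _]/(k v == i); by case: (k v == i).
Qed.

Definition monoT (la : {ffun 'I_n -> 'I_n.+1}) (t : {ffun 'I_n * 'I_n -> 'I_n}) : 'X_{1..n} :=
  (\sum_(c | in_shape la c) U_(t c))%MM.

Lemma mcoeff_schur m la : mcoeff m (schur la) = ((\sum_(t | is_ssyt la t) (monoT la t == m)) : nat)%:R.
Proof.
rewrite /schur raddf_sum natr_sum /=; apply eq_bigr => t _.
have -> : (\prod_(c | in_shape la c) 'X_(t c) : {mpoly rat[n]}) = 'X_[monoT la t].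
  by rewrite /monoT (big_morph (fun m => 'X_[m]) (@mpolyXD _ _) (@mpolyX0 _ _)).
by rewrite mcoeffX.
Qed.

Lemma monoTE la t i : monoT la t i = (\sum_(c | in_shape la c) (t c == i))%N.
Proof. by rewrite /monoT mnm_sumE; apply eq_bigr => c _; rewrite mnm1E. Qed.

Lemma transfer (c : {ffun 'I_n -> 'I_n.+1} -> rat) :
  (forall la, 0 <= c la) ->
  chrom_sym e = \sum_(la | is_partition la) c la *: schur la ->
  forall k0, proper_coloring e k0 ->
  exists la t, [/\ is_partition la, is_ssyt la t, monoT la t = mono k0 &
    forall t', is_ssyt la t' -> exists k1, proper_coloring e k1 /\ mono k1 = monoT la t'].
Proof.
move=> c0 HX k0 Hk0.
have Hco m : mcoeff m (chrom_sym e) = \sum_(la | is_partition la) c la * mcoeff m (schur la).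
  by rewrite HX raddf_sum; apply eq_bigr => la _; exact: mcoeffZ.
have Hsch_ge0 (m : 'X_{1..n}) (la : {ffun 'I_n -> 'I_n.+1}) : 0 <= mcoeff m (schur la) by rewrite mcoeff_schur ler0n.
have Hpos : 0 < mcoeff (mono k0) (chrom_sym e).
  rewrite mcoeff_chrom ltr0n (bigD1 k0) //= eqxx; lia.
have [la /andP[Hla Hpos']] : exists la, is_partition la && (0 < c la * mcoeff (mono k0) (schur la)).
  case: (pickP (fun la => is_partition la && (0 < c la * mcoeff (mono k0) (schur la)))) => [la Hla|H]; first by exists la.
  exfalso; move: Hpos; rewrite Hco big1 ?ltxx // => la Hla; have := H la; rewrite Hla /= => /negbT.
  by rewrite lt_def (mulr_ge0 (c0 la) (Hsch_ge0 _ la)) andbT negbK => /eqP.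
have Hcla : 0 < c la.
  rewrite lt_def c0 andbT; apply/eqP => H0; move: Hpos'; by rewrite H0 mul0r ltxx.
have Hsla : 0 < mcoeff (mono k0) (schur la).
  rewrite lt_def Hsch_ge0 andbT; apply/eqP => H0; move: Hpos'; by rewrite H0 mulr0 ltxx.
move: Hsla; rewrite mcoeff_schur ltr0n => /exists_of_sum' [t [Ht Htm]].
exists la, t; split => // t' Ht'.
have : 0 < mcoeff (monoT la t') (chrom_sym e).
  have Ha : 0 < c la * mcoeff (monoT la t') (schur la).
    apply: mulr_gt0 => //; rewrite mcoeff_schur ltr0n (bigD1 t') //= eqxx; lia.
  rewrite Hco (bigD1 la) //=; apply: (lt_le_trans Ha); rewrite lerDl.
  by apply: sumr_ge0 => i _; apply: mulr_ge0.
rewrite mcoeff_chrom ltr0n => /exists_of_sum' [k1 [Hk1 Hm]]; by exists k1.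
Qed.

End Coeff.

Section Main.
Variables (T : finType) (e : rel T).

Lemma sum_set3 (F : {set T} -> nat) X Y Z : X != Y -> X != Z -> Y != Z ->
  \sum_(B in [set X; Y; Z]) F B = F X + F Y + F Z.
Proof.
move=> nXY nXZ nYZ.
rewrite -setUA big_setU1 /=; last by rewrite !inE negb_or nXY nXZ.
rewrite big_setU1 /=; last by rewrite !inE.
by rewrite big_set1 addnA.
Qed.

Lemma card_set3 (X Y Z : {set T}) : X != Y -> X != Z -> Y != Z -> #|[set X; Y; Z]| = 3.
Proof. by move=> nXY nXZ nYZ; rewrite -setUA !cardsU1 cards1 !inE negb_or nXY nXZ nYZ. Qed.

Lemma sqsum_ptype (P : {set {set T}}) : \sum_(x <- ptype P) x ^ 2 = \sum_(B in P) #|B| ^ 2.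
Proof. by rewrite /ptype (perm_big _ (permEl (perm_sort _ _))) big_map big_enum. Qed.

Lemma sorted3 (P : {set {set T}}) : #|P| = 3 ->
  exists X Y Z, [/\ P = [set X; Y; Z], X != Y, X != Z, Y != Z & #|Z| <= #|Y| <= #|X|].
Proof.
move=> H3.
pose r := fun X Y : {set T} => #|Y| <= #|X|.
have tot : total r by move=> X Y; rewrite /r leq_total.
have Hperm : perm_eq (sort r (enum P)) (enum P) by rewrite perm_sort perm_refl.
have Hs : sorted r (sort r (enum P)) := sort_sorted tot _.
have Hsz : size (sort r (enum P)) = 3 by rewrite size_sort -cardE.
have Hu : uniq (sort r (enum P)) by rewrite (perm_uniq Hperm) enum_uniq.
have Hmem : forall W, (W \in sort r (enum P)) = (W \in P) by move=> W; rewrite (perm_mem Hperm) mem_enum.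
move: Hsz Hs Hu Hmem; case: (sort r (enum P)) => [|X [|Y [|Z [|? ?]]]] //= _.
rewrite /r => /andP[hYX /andP[hZY _]]; rewrite !inE !negb_or => /and3P[/andP[nXY nXZ] nYZ _] Hmem.
exists X, Y, Z; split => //.
  by apply/setP => W; rewrite -Hmem !inE orbA.
by rewrite hZY hYX.
Qed.

End Main.

Theorem lemma3p5 (T : finType) (e : rel T) :
  simple_graph e ->
  schur_positive e ->
  tripartite e ->
  (forall P Q, stable_tripartition e P -> stable_tripartition e Q ->
     ptype P = ptype Q) ->
  forall P, stable_tripartition e P -> balanced P.
Proof.
move=> _ [c [Hc0 HX]] _ Hsame P HP B1 B2 HB1 HB2.
have TR := transfer Hc0 HX; clear HX Hc0.
rewrite leqNgt; apply/negP => Hgt.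
have HP' := HP; case: HP' => Hpart H3 Hst.
have Hpart' := Hpart; move: Hpart' => /and3P[/eqP Hcov Htriv H0].
have [X [Y [Z [EP nXY nXZ nYZ /andP[hZY hYX]]]]] := sorted3 H3.
have inP : forall W, (W \in P) = [|| W == X, W == Y | W == Z] by move=> W; rewrite EP !inE orbA.
have XP : X \in P by rewrite inP eqxx.
have YP : Y \in P by rewrite inP eqxx orbT.
have ZP : Z \in P by rewrite inP eqxx !orbT.
have hdisj : forall U V, U \in P -> V \in P -> U != V -> [disjoint U & V] by move/trivIsetP: Htriv.
have hne : forall U, U \in P -> 0 < #|U|.
  by move=> U HU; rewrite card_gt0; apply/eqP => E; move: H0; rewrite -E HU.
have hcovv : forall v, [|| v \in X, v \in Y | v \in Z].
  move=> v; have : v \in cover P by rewrite Hcov inE.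
  move/bigcupP => [W HW Hv]; move: HW; rewrite inP => /or3P [/eqP E|/eqP E|/eqP E]; subst W; by rewrite Hv ?orbT.
have HB1X : #|B1| <= #|X|.
  by move: HB1; rewrite inP => /or3P[/eqP->|/eqP->|/eqP->]; [exact: leqnn | exact: hYX | exact: leq_trans hZY hYX].
have HB2Z : #|Z| <= #|B2|.
  by move: HB2; rewrite inP => /or3P[/eqP->|/eqP->|/eqP->]; [exact: leq_trans hZY hYX | exact: hZY | exact: leqnn].
have HCA : #|Z| + 2 <= #|X| by clear -Hgt HB1X HB2Z; lia.
have HZ1 : 0 < #|Z| := hne Z ZP.
have Hn : #|T| = #|X| + #|Y| + #|Z|.
  by rewrite -cardsT (card_partition Hpart) EP sum_set3.
have n0 : 0 < #|T| by clear -Hn HZ1 HCA; lia.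
have n1 : 1 < #|T| by clear -Hn HZ1 HCA; lia.
have n2 : 2 < #|T| by clear -Hn HZ1 HCA; lia.
pose i0 : 'I_#|T| := Ordinal n0.
pose i1 : 'I_#|T| := Ordinal n1.
pose i2 : 'I_#|T| := Ordinal n2.
have stab : forall U u v, U \in P -> u \in U -> v \in U -> ~~ e u v.
  move=> U u v HU Hu Hv; have := Hst U HU; rewrite /stable.
  by move=> /forallP /(_ u) /implyP /(_ Hu) /forallP /(_ v) /implyP /(_ Hv).
pose k0 : {ffun T -> 'I_#|T|} := [ffun v => if v \in X then i0 else if v \in Y then i1 else i2].
have proper0 : proper_coloring e k0.
  apply/forallP => u; apply/forallP => v; apply/implyP => Huv.
  have Hs : forall W, W \in P -> u \in W -> v \in W -> False.
    by move=> W HW Hu Hv; move: (stab W u v HW Hu Hv); rewrite Huv.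
  
  
  have Hk : forall w, [/\ k0 w = i0 -> w \in X, k0 w = i1 -> w \in Y & k0 w = i2 -> w \in Z].
    move=> w; rewrite ffunE; move: (hcovv w).
    case: ifP => HwX.
      by move=> _; split => // E; move: (congr1 val E).
    case: ifP => HwY.
      by move=> _; split => // E; move: (congr1 val E).
    move=> Hc; split => [E|E|_]; try by move: (congr1 val E).
    by move: Hc => /=.
  apply/negP => /eqP E.
  have : [|| k0 u == i0, k0 u == i1 | k0 u == i2] by rewrite ffunE; do 2?case: ifP => _; rewrite eqxx ?orbT.
  case: (Hk u) (Hk v) => ha hb hc [ha' hb' hc'].
  move/or3P => [] /eqP Eu; have Ev : k0 v = k0 u by rewrite E.
  - by apply: (Hs X XP); [apply: ha | apply: ha']; rewrite ?Ev.
  - by apply: (Hs Y YP); [apply: hb | apply: hb']; rewrite ?Ev.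
  - by apply: (Hs Z ZP); [apply: hc | apply: hc']; rewrite ?Ev.
have Hk0 : forall i, mono k0 i =
    if i == i0 then #|X| else if i == i1 then #|Y| else if i == i2 then #|Z| else 0.
  have dXY := hdisj X Y XP YP nXY.
  have dXZ := hdisj X Z XP ZP nXZ.
  have dYZ := hdisj Y Z YP ZP nYZ.
  have EX : [set v | k0 v == i0] = X.
    by apply/setP => v; rewrite inE ffunE; case: ifP => // _; case: ifP.
  have EY : [set v | k0 v == i1] = Y.
    apply/setP => v; rewrite inE ffunE; case: ifP => Hv; first by rewrite (disjointFr dXY Hv).
    by case: ifP.
  have EZ : [set v | k0 v == i2] = Z.
    apply/setP => v; rewrite inE ffunE; case: ifP => Hv; first by rewrite (disjointFr dXZ Hv).
    case: ifP => Hv'; first by rewrite (disjointFr dYZ Hv').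
    by move: (hcovv v); rewrite Hv Hv' /= eqxx.
  move=> i; rewrite monoE.
  case: (eqVneq i i0) => [->|ne0]; first by rewrite EX.
  case: (eqVneq i i1) => [->|ne1]; first by rewrite EY.
  case: (eqVneq i i2) => [->|ne2]; first by rewrite EZ.
  apply/eqP; rewrite cards_eq0; apply/eqP/setP => v; rewrite !inE ffunE.
  by do 2?case: ifP => _; apply/negbTE; rewrite eq_sym.
have [la [t [Hla Ht Htm Hall]]] := TR k0 proper0.
have Hct : forall i : 'I_#|T|, \sum_(c | in_shape la c) ((t c == i) : nat) =
     if i == i0 then #|X| else if i == i1 then #|Y| else if i == i2 then #|Z| else 0.
  by move=> i; rewrite -monoTE Htm Hk0.
have HCBA : #|Z| <= #|Y| <= #|X| by rewrite hZY hYX.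
have [t' [Ht' Hct']] := @tableau_move _ la t i0 i1 i2 #|X| #|Y| #|Z| erefl erefl erefl Hla Ht Hct HCBA HCA.
have [k1 [proper1 Hk1]] := Hall t' Ht'.
have Hk1c : forall i, #|[set v | k1 v == i]| =
    if i == i0 then #|X|.-1 else if i == i1 then #|Y| else if i == i2 then #|Z|.+1 else 0.
  by move=> i; rewrite -monoE Hk1 monoTE Hct'.
pose K0 := [set v | k1 v == i0].
pose K1 := [set v | k1 v == i1].
pose K2 := [set v | k1 v == i2].
have cK0 : #|K0| = #|X|.-1 by rewrite Hk1c eqxx.
have cK1 : #|K1| = #|Y| by rewrite Hk1c eqxx.
have cK2 : #|K2| = #|Z|.+1 by rewrite Hk1c eqxx.
have pK0 : 0 < #|K0| by rewrite cK0; clear -HCA; lia.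
have pK1 : 0 < #|K1| by rewrite cK1; clear -HCA hZY HZ1; lia.
have pK2 : 0 < #|K2| by rewrite cK2.
have kv3 : forall v, [|| k1 v == i0, k1 v == i1 | k1 v == i2].
  move=> v; apply/negPn/negP => H; have := Hk1c (k1 v).
  move: H; rewrite !negb_or => /and3P[na nb nc]; rewrite (negbTE na) (negbTE nb) (negbTE nc).
  move/eqP; rewrite cards_eq0 => /eqP E.
  have : v \in [set w | k1 w == k1 v] by rewrite inE.
  by rewrite E inE.
have disjK : forall i j, i != j -> [disjoint [set v | k1 v == i] & [set v | k1 v == j]].
  move=> i j nij; rewrite disjoint_subset; apply/subsetP => v; rewrite !inE => /eqP ->.
  exact: nij.
have neqK : forall i j, i != j -> 0 < #|[set v | k1 v == i]| -> [set v | k1 v == i] != [set v | k1 v == j].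
  move=> i j nij /card_gt0P [v Hv]; apply/eqP => E.
  have := disjK i j nij; move/disjointFr => /(_ v Hv); by rewrite -E Hv.
have n01 : K0 != K1 by apply: neqK.
have n02 : K0 != K2 by apply: neqK.
have n12 : K1 != K2 by apply: neqK.
have stableK : forall i, stable e [set v | k1 v == i].
  move=> i; apply/forallP => u; apply/implyP; rewrite inE => /eqP Hu.
  apply/forallP => v; apply/implyP; rewrite inE => /eqP Hv.
  move/forallP: proper1 => /(_ u) /forallP /(_ v) /implyP H.
  by apply/negP => Huv; have := H Huv; rewrite Hu Hv eqxx.
have HQ : stable_tripartition e [set K0; K1; K2].
  split.
  - apply/and3P; split.
    + apply/eqP/setP => v; rewrite inE; apply/bigcupP.
      have := kv3 v => /or3P[H|H|H]; [exists K0|exists K1|exists K2]; by rewrite ?inE ?eqxx ?orbT.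
    + apply/trivIsetP => U V; rewrite !inE -!orbA => /or3P[/eqP->|/eqP->|/eqP->] /or3P[/eqP->|/eqP->|/eqP->];
        rewrite ?eqxx // => _; by apply: disjK.
    + rewrite !inE -!orbA; apply/negP => /or3P[/eqP E|/eqP E|/eqP E].
      * by move: pK0; rewrite -E cards0.
      * by move: pK1; rewrite -E cards0.
      * by move: pK2; rewrite -E cards0.
  - exact: card_set3.
  - by move=> U; rewrite !inE -!orbA => /or3P[/eqP->|/eqP->|/eqP->]; apply: stableK.
have := Hsame P _ HP HQ => /(congr1 (fun s => \sum_(x <- s) x ^ 2)).
rewrite !sqsum_ptype EP (sum_set3 _ nXY nXZ nYZ) (sum_set3 _ n01 n02 n12) cK0 cK1 cK2.
clear -HCA HZ1; nia.
Qed.
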